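(* Let $\alpha,\beta,\gamma,\lambda,x$ be non-negative integers with $(\alpha,\beta,\gamma,\lambda,x)\neq(0,0,0,0,0)$. Then for every integer $n\ge0$, $$T_{n+1}^{\lambda,x}(\alpha,\beta,\gamma)=\gamma\,T_n^{\lambda,x}(\alpha,\beta,\gamma-\alpha)+x\lambda\beta\sum_{s=0}^{n}\binom{n}{s}(\gamma|\alpha)_s\,T_{n-s}^{\lambda+1,x}(\alpha,\beta,\beta-\alpha).$$
   Context: For complex numbers $c,\alpha$ and an integer $n\ge 0$ let $(c|\alpha)_n=\prod_{i=0}^{n-1}(c-i\alpha)$, with $(c|\alpha)_0=1$. Let $E_{\alpha,c}(t)=\sum_{n\ge 0}(c|\alpha)_n\,t^n/n!$, viewed as a formal power series in $t$. It equals $(1+\alpha t)^{c/\alpha}$ if $\alpha\neq0$ and $e^{ct}$ if $\alpha=0$. For complex $\alpha,\beta,\gamma,x$ and a non-negative integer $\lambda$, the numbers $T_n^{\lambda,x}(\alpha,\beta,\gamma)$, $n\ge0$, are defined by the formal power series identity $$\sum_{n\ge0}T_n^{\lambda,x}(\alpha,\beta,\gamma)\frac{t^n}{n!}=E_{\alpha,\gamma}(t)\,\bigl(1-x(E_{\alpha,\beta}(t)-1)\bigr)^{-\lambda}.$$ The third argument may be any complex number. *)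

(* Defs.v *)
From HB Require Import structures.
From mathcomp Require Import all_boot all_order all_algebra.
Set Implicit Arguments. Unset Strict Implicit. Unset Printing Implicit Defensive.
Import Order.TTheory GRing.Theory Num.Theory.
Local Open Scope ring_scope.

Section FPS.
Variable R : numFieldType.

Definition fps := nat -> R.

Definition fps_one : fps := fun n => (n == 0)%:R.

Definition fps_mul (f g : fps) : fps :=
  fun n => \sum_(i < n.+1) f i * g (n - i)%N.

Definition fps_pow (f : fps) (k : nat) : fps := iter k (fps_mul f) fps_one.

(* 1/(1-u) = sum_k u^k, for a series u with zero constant term;
   the coefficient of t^n only involves k <= n. *)
Definition fps_geom (u : fps) : fps :=
  fun n => \sum_(k < n.+1) fps_pow u k n.

Definition falling (c a : R) (n : nat) : R := \prod_(i < n) (c - i%:R * a).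

Definition Eser (a c : R) : fps := fun n => falling c a n / (n`!)%:R.

(* T_n^{lam,x}(a,b,c): n! times the coefficient of t^n in
   E_{a,c}(t) * (1 - x (E_{a,b}(t) - 1))^{-lam} *)
Definition Tnum (lam : nat) (x a b c : R) (n : nat) : R :=
  let u : fps := fun k => x * (Eser a b k - (k == 0)%:R) in
  (n`!)%:R * fps_mul (Eser a c) (fps_pow (fps_geom u) lam) n.

End FPS.

(* Main.v *)
Require Import Defs.
From HB Require Import structures.
From mathcomp Require Import all_boot all_order all_algebra.
From mathcomp Require Import zify ring.
Import Order.TTheory GRing.Theory Num.Theory.
Local Open Scope ring_scope.

Section Aux.
Variable R : numFieldType.

Definition tr (N : nat) (f : nat -> R) : {poly R} := \poly_(i < N) f i.
Definition eqm (N : nat) (p q : {poly R}) := forall i, (i < N)%N -> p`_i = q`_i.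

Lemma eqm_refl N p : eqm N p p. Proof. by []. Qed.
Lemma eqm_sym N p q : eqm N p q -> eqm N q p.
Proof. by move=> h i hi; rewrite h. Qed.
Lemma eqm_trans N p q r : eqm N p q -> eqm N q r -> eqm N p r.
Proof. by move=> h1 h2 i hi; rewrite h1 ?h2. Qed.
Lemma eqm_le M N p q : (M <= N)%N -> eqm N p q -> eqm M p q.
Proof. move=> hMN h i hi; apply: h; lia. Qed.
Lemma eqm_add N p p' q q' : eqm N p p' -> eqm N q q' -> eqm N (p + q) (p' + q').
Proof. by move=> h1 h2 i hi; rewrite !coefD h1 ?h2. Qed.
Lemma eqm_sub N p p' q q' : eqm N p p' -> eqm N q q' -> eqm N (p - q) (p' - q').
Proof. by move=> h1 h2 i hi; rewrite !coefB h1 ?h2. Qed.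
Lemma eqm_scale N c p p' : eqm N p p' -> eqm N (c *: p) (c *: p').
Proof. by move=> h1 i hi; rewrite !coefZ h1. Qed.
Lemma eqm_muln N k p p' : eqm N p p' -> eqm N (p *+ k) (p' *+ k).
Proof. by move=> h1 i hi; rewrite !coefMn h1. Qed.
Lemma eqm_mul N p p' q q' : eqm N p p' -> eqm N q q' -> eqm N (p * q) (p' * q').
Proof.
move=> h1 h2 i hi; rewrite !coefM; apply: eq_bigr => j _.
have := ltn_ord j => hj.
rewrite h1 ?h2 //; lia.
Qed.
Lemma eqm_pow N p p' k : eqm N p p' -> eqm N (p ^+ k) (p' ^+ k).
Proof.
move=> h; elim: k => [|k IH]; first by rewrite !expr0.
by rewrite !exprS; apply: eqm_mul.
Qed.
Lemma eqm_deriv N p q : eqm N.+1 p q -> eqm N (p^`()) (q^`()).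
Proof. by move=> h i hi; rewrite !coef_deriv h. Qed.

Lemma tr_le M N f : (M <= N)%N -> eqm M (tr N f) (tr M f).
Proof. move=> hMN i hi; rewrite !coef_poly hi; case: ifP => //; lia. Qed.

Lemma tr_coef N f i : (i < N)%N -> (tr N f)`_i = f i.
Proof. by move=> hi; rewrite coef_poly hi. Qed.

Lemma tr_mul N f g : eqm N (tr N (fps_mul f g)) (tr N f * tr N g).
Proof.
move=> i hi; rewrite tr_coef // coefM /fps_mul; apply: eq_bigr => j _.
have := ltn_ord j => hj.
rewrite !tr_coef //; lia.
Qed.

Lemma tr_one N : eqm N (tr N (fps_one R)) 1.
Proof. by move=> i hi; rewrite tr_coef // coef1. Qed.

Lemma tr_pow N f k : eqm N (tr N (fps_pow f k)) ((tr N f) ^+ k).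
Proof.
elim: k => [|k IH]; first by rewrite expr0; apply: tr_one.
rewrite exprS; apply: eqm_trans (tr_mul _ _ _) _.
exact: eqm_mul.
Qed.


Section Geom.
Variable u : nat -> R.
Hypothesis u0 : u 0%N = 0.

Lemma pow_low k m : (m < k)%N -> fps_pow u k m = 0.
Proof.
elim: k m => [|k IH] m hm; first by [].
rewrite /fps_pow iterS -/(fps_pow u k) /fps_mul.
apply: big1 => -[[|i] hi] _ /=; first by rewrite u0 mul0r.
rewrite IH ?mulr0 //; lia.
Qed.

Lemma geom_ext n K : (n < K)%N -> fps_geom u n = \sum_(k < K) fps_pow u k n.
Proof.
move=> hK; rewrite /fps_geom -!(big_mkord xpredT (fun k => fps_pow u k n)).
rewrite (@big_cat_nat _ _ _ n.+1 0 K xpredT (fun k => fps_pow u k n) (leq0n _) hK) /= [X in _ + X]big1_seq ?addr0 //.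
move=> k /andP[_]; rewrite mem_iota => /andP[h1 h2]; apply: pow_low; lia.
Qed.

Lemma geom_rec n : fps_geom u n = (n == 0%N)%:R + fps_mul u (fps_geom u) n.
Proof.
rewrite (@geom_ext n n.+2 (ltnW (ltnSn n.+1))) big_ord_recl /=.
congr (_ + _).
rewrite /fps_mul.
under [RHS]eq_bigr => i _.
  rewrite (@geom_ext (n - i) n.+1); last by have := ltn_ord i; lia.
  rewrite mulr_sumr; over.
rewrite exchange_big /=; apply: eq_bigr => k _.
by [].
Qed.

Lemma geom_eqm N : eqm N (tr N (fps_geom u) * (1 - tr N u)) 1.
Proof.
have h : eqm N (tr N (fps_geom u)) (1 + tr N u * tr N (fps_geom u)).
  move=> i hi; rewrite tr_coef // geom_rec coefD coef1; congr (_ + _).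
  by rewrite -(@tr_mul N u (fps_geom u) i hi) tr_coef.
move=> i hi; rewrite mulrBr mulr1 coefB h // coefD mulrC addrK //.
Qed.

End Geom.

Lemma falling_S (c a : R) n : falling c a n.+1 = c * falling (c - a) a n.
Proof.
rewrite /falling big_ord_recl /= mul0r subr0; congr (_ * _).
apply: eq_bigr => i _; rewrite /bump /= -natr1 ; ring.
Qed.

Lemma Eser_deriv N (a c : R) : eqm N ((tr N.+1 (Eser a c))^`()) (c *: tr N (Eser a (c - a))).
Proof.
move=> i hi; rewrite coef_deriv coefZ !tr_coef // ?ltnS //.
rewrite /Eser falling_S factS natrM -mulr_natr.
have h1 : (i.+1%:R : R) != 0 by rewrite pnatr_eq0.
have h2 : ((i`!)%:R : R) != 0 by rewrite pnatr_eq0 -lt0n fact_gt0.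
field; by rewrite h2 addrC natr1 h1.
Qed.

Definition ufun (x a b : R) : nat -> R := fun k => x * (Eser a b k - (k == 0%N)%:R).

Lemma ufun0 x a b : ufun x a b 0%N = 0.
Proof. by rewrite /ufun /Eser /falling big_ord0 fact0 divr1 subrr mulr0. Qed.

Lemma U_deriv N x a b : eqm N ((tr N.+1 (ufun x a b))^`()) ((x * b) *: tr N (Eser a (b - a))).
Proof.
move=> i hi; have := Eser_deriv N a b i hi.
rewrite !coef_deriv !coefZ !tr_coef // ?ltnS // /ufun /= subr0 => h.
by rewrite -mulrnAr h mulrA.
Qed.

Lemma Tnum_poly N m lam x a b c : (m < N)%N ->
  Tnum lam x a b c m = (m`!)%:R * (tr N (Eser a c) * tr N (fps_geom (ufun x a b)) ^+ lam)`_m.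
Proof.
move=> hm.
have -> : Tnum lam x a b c m = (m`!)%:R * fps_mul (Eser a c) (fps_pow (fps_geom (ufun x a b)) lam) m by [].
congr (_ * _); rewrite -[LHS](@tr_coef N (fps_mul _ _) m hm) (@tr_mul N _ _ m hm).
exact: (@eqm_mul N _ _ _ _ (eqm_refl N _) (tr_pow N _ lam) m hm).
Qed.


Arguments eqm_sym {N p q}.
Arguments eqm_trans {N p q r}.
Arguments eqm_le {M N p q}.
Arguments eqm_add {N p p' q q'}.
Arguments eqm_sub {N p p' q q'}.
Arguments eqm_scale {N} c {p p'}.
Arguments eqm_muln {N} k {p p'}.
Arguments eqm_mul {N p p' q q'}.
Arguments eqm_pow {N p p'} k.
Arguments eqm_deriv {N p q}.

Lemma main_gen (x a b c : R) (lam n : nat) :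
  Tnum lam x a b c n.+1 =
      c * Tnum lam x a b (c - a) n
    + x * lam%:R * b *
        \sum_(s < n.+1) ('C(n, s))%:R * falling c a s
                         * Tnum lam.+1 x a b (b - a) (n - s)%N.
Proof.
set u := ufun x a b.
set Ec := tr n.+2 (Eser a c).
set G := tr n.+2 (fps_geom u).
set U := tr n.+2 u.
have hG : eqm n.+2 (G * (1 - U)) 1 by apply: geom_eqm; apply: ufun0.
have eEc : Ec = tr n.+2 (Eser a c) by [].
have eG : G = tr n.+2 (fps_geom u) by [].
have eU : U = tr n.+2 u by [].
clearbody Ec G U.
have h1 : eqm n.+1 (G^`() * (1 - U)) (G * U^`()).
  move=> i hi; have := eqm_deriv hG i hi.
  rewrite derivM derivB -polyC1 derivC sub0r coefD coefC mulrN coefN.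
  by rewrite polyC1 if_same => /eqP; rewrite subr_eq0 => /eqP.
have h2 : eqm n.+1 (G^`()) (G * G * U^`()).
  have hG' : eqm n.+1 ((1 - U) * G) 1 by apply: (eqm_le (leqnSn _)); rewrite mulrC.
  apply: (@eqm_trans _ _ (G^`() * ((1 - U) * G))).
    rewrite -{1}[G^`()]mulr1; apply: eqm_mul; [exact: eqm_refl | exact: eqm_sym hG'].
  rewrite mulrA; apply: eqm_trans (eqm_mul h1 (eqm_refl _ G)) _.
  have -> : G * U^`() * G = G * G * U^`() by ring.
  exact: eqm_refl.
have hU : eqm n.+1 (U^`()) ((x * b) *: tr n.+1 (Eser a (b - a))) by rewrite eU; apply: U_deriv.
have hP : eqm n.+1 ((G ^+ lam)^`())
   ((x * b)%:P * tr n.+1 (Eser a (b - a)) * G ^+ lam.+1 *+ lam).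
  rewrite deriv_exp.
  apply: eqm_trans (eqm_muln lam (eqm_mul h2 (eqm_refl _ (G ^+ lam.-1)))) _.
  apply: eqm_trans (eqm_muln lam (eqm_mul (eqm_mul (eqm_refl _ (G * G)) hU) (eqm_refl _ _))) _.
  case: lam => [|l]; rewrite ?mulr0n; first exact: eqm_refl.
  have -> : G * G * ((x * b) *: tr n.+1 (Eser a (b - a))) * G ^+ l.+1.-1 =
     (x * b)%:P * tr n.+1 (Eser a (b - a)) * G ^+ l.+2.
    by rewrite -mul_polyC !exprS /=; ring.
  exact: eqm_refl.
have key : eqm n.+1 ((Ec * G ^+ lam)^`())
   (c%:P * (tr n.+1 (Eser a (c - a)) * G ^+ lam)
    + (x * b * lam%:R)%:P * (Ec * (tr n.+1 (Eser a (b - a)) * G ^+ lam.+1))).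
  have hE : eqm n.+1 (Ec^`()) (c *: tr n.+1 (Eser a (c - a))) by rewrite eEc; apply: Eser_deriv.
  rewrite derivM.
  apply: eqm_trans (eqm_add (eqm_mul hE (eqm_refl _ (G ^+ lam)))
                            (eqm_mul (eqm_refl _ Ec) hP)) _.
  have -> : c *: tr n.+1 (Eser a (c - a)) * G ^+ lam +
     Ec * ((x * b)%:P * tr n.+1 (Eser a (b - a)) * G ^+ lam.+1 *+ lam) =
     c%:P * (tr n.+1 (Eser a (c - a)) * G ^+ lam)
    + (x * b * lam%:R)%:P * (Ec * (tr n.+1 (Eser a (b - a)) * G ^+ lam.+1)).
    by rewrite -mul_polyC !polyCM polyC_natr -mulr_natr; ring.
  exact: eqm_refl.
rewrite (@Tnum_poly n.+2 n.+1) // -eEc -eG.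
have -> : (n.+1)`!%:R * (Ec * G ^+ lam)`_n.+1 = n`!%:R * ((Ec * G ^+ lam)^`())`_n.
  by rewrite coef_deriv -mulr_natr factS natrM; ring.
rewrite (key n (ltnSn n)) coefD !coefCM.
rewrite (@Tnum_poly n.+1 n) //.
have e1 : (tr n.+1 (Eser a (c - a)) * G ^+ lam)`_n
   = (tr n.+1 (Eser a (c - a)) * tr n.+1 (fps_geom (ufun x a b)) ^+ lam)`_n.
  apply: (@eqm_mul n.+1 _ _ _ _ (eqm_refl _ _) (eqm_pow lam _) n (ltnSn n)).
  by rewrite eG; apply: tr_le.
rewrite -e1 [(Ec * _)`_n]coefM.
have e2 : forall s : 'I_n.+1,
   Ec`_s * (tr n.+1 (Eser a (b - a)) * G ^+ lam.+1)`_(n - s) * n`!%:R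
   = 'C(n, s)%:R * falling c a s * Tnum lam.+1 x a b (b - a) (n - s).
  move=> s; have hs := ltn_ord s.
  rewrite (@Tnum_poly n.+1); last by lia.
  rewrite eEc tr_coef; last by lia.
  have -> : (tr n.+1 (Eser a (b - a)) * G ^+ lam.+1)`_(n - s)
     = (tr n.+1 (Eser a (b - a)) * tr n.+1 (fps_geom (ufun x a b)) ^+ lam.+1)`_(n - s).
    apply: (@eqm_mul n.+1 _ _ _ _ (eqm_refl _ _) (eqm_pow lam.+1 _)); last by lia.
    by rewrite eG; apply: tr_le.
  have hs' : (s <= n)%N by lia.
  have hb := bin_fact hs'.
  have hs0 : ((s`!)%:R : R) != 0 by rewrite pnatr_eq0 -lt0n fact_gt0.
  rewrite /Eser -hb !natrM.
  by field.
rewrite -(eq_bigr _ (fun s _ => e2 s)) -mulr_suml.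
ring.
Qed.

End Aux.

Theorem theorem7 (R : numFieldType) (a b c lam x : nat) :
  (a, b, c, lam, x) <> (0, 0, 0, 0, 0)%N ->
  forall n : nat,
    Tnum lam (x%:R : R) a%:R b%:R c%:R n.+1 =
      c%:R * Tnum lam (x%:R : R) a%:R b%:R (c%:R - a%:R) n
    + x%:R * lam%:R * b%:R *
        \sum_(s < n.+1) ('C(n, s))%:R * falling (c%:R : R) a%:R s
                         * Tnum lam.+1 (x%:R : R) a%:R b%:R (b%:R - a%:R) (n - s)%N.
Proof. by move=> _ n; apply: main_gen. Qed.
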